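(* Let $K$ be an algebraically closed field of characteristic $2$ and, for $c\in K$, let $X_c=\{c\,\sigma_1\sigma_3+\sigma_4=0\}\subset\mathbb{P}^3_K$. For every $c\neq0$, $X_c$ has exactly $10$ singular points, namely the $\mathfrak{S}_4$-orbits of $(0,0,1,1)$ and $(0,0,0,1)$, and all of them are nodes ($A_1$-singularities).
   Context: $\sigma_i$ is the $i$-th elementary symmetric polynomial in $x_1,\dots,x_4$; $\mathfrak{S}_4$ permutes coordinates. A node is a double point whose projectivized tangent cone is a smooth conic. *)

(* Defs.v *)
From HB Require Import structures.
From mathcomp Require Import all_boot all_order all_algebra all_fingroup.
From mathcomp Require Export mpoly.
Set Implicit Arguments. Unset Strict Implicit. Unset Printing Implicit Defensive.
Import Order.TTheory GRing.Theory.
Local Open Scope ring_scope.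

Section Defs.
Variables (K : fieldType) (n : nat).

Definition Xc_poly (c : K) : {mpoly K[4]} :=
  c *: (mesym 4 K 1 * mesym 4 K 3) + mesym 4 K 4.

(* Homogeneous coordinates: a vector is a point of P^{n-1} iff nonzero. *)
Definition nonzero_vec (v : 'I_n -> K) : Prop := exists i, v i != 0.

Definition proj_eq (u v : 'I_n -> K) : Prop :=
  exists a : K, a != 0 /\ forall i, u i = a * v i.

(* singular point of the projective hypersurface {F = 0} (F(v)=0 and all
   partial derivatives vanish at v; in char 2 F(v)=0 is not implied by Euler) *)
Definition is_sing_pt (F : {mpoly K[n]}) (v : 'I_n -> K) : Prop :=
  F.@[v] = 0 /\ forall i : 'I_n, (F^`M(i)).@[v] = 0.

Definition translate (F : {mpoly K[n]}) (v : 'I_n -> K) : {mpoly K[n]} :=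
  F \mPo [tuple (v i)%:MP + 'X_i | i < n].

(* restriction to the hyperplane y_j = 0 (the affine chart x_j = v_j) *)
Definition restrict_chart (j : 'I_n) (p : {mpoly K[n]}) : {mpoly K[n]} :=
  p \mPo [tuple (if i == j then 0 else 'X_i) | i < n].

Definition hpart (d : nat) (p : {mpoly K[n]}) : {mpoly K[n]} :=
  \sum_(m <- msupp p | mdeg m == d) p@_m *: 'X_[m].

(* quadratic part of the local equation of {F = 0} at v in the chart j:
   it defines the tangent cone; its projectivization lives in
   P^{n-2} = P({y | y_j = 0}). *)
Definition tangent_quadric (F : {mpoly K[n]}) (v : 'I_n -> K) (j : 'I_n) :=
  hpart 2 (restrict_chart j (translate F v)).

Definition smooth_quadric (q : {mpoly K[n]}) (j : 'I_n) : Prop :=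
  q != 0 /\
  forall y : 'I_n -> K, y j = 0 -> nonzero_vec y ->
    ~ (q.@[y] = 0 /\ forall i : 'I_n, (q^`M(i)).@[y] = 0).

(* node: a singular point (so constant and linear terms of the local
   equation vanish) whose quadratic term is nonzero (double point) and
   whose projectivized tangent cone is a smooth conic; checked in every
   affine chart containing the point. *)
Definition is_node (F : {mpoly K[n]}) (v : 'I_n -> K) : Prop :=
  is_sing_pt F v /\
  forall j : 'I_n, v j != 0 -> smooth_quadric (tangent_quadric F v j) j.

End Defs.

Definition pt0011 (K : fieldType) : 'I_4 -> K :=
  fun i => if (2 <= (i : nat))%N then 1 else 0.
Definition pt0001 (K : fieldType) : 'I_4 -> K :=
  fun i => if (i : nat) == 3%N then 1 else 0.

Definition permute_coords (K : fieldType) (s : 'S_4) (v : 'I_4 -> K) :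
  'I_4 -> K := fun i => v (s i).

(* Main.v *)
Require Import Defs.
From HB Require Import structures.
From mathcomp Require Import all_boot all_order all_algebra all_fingroup.
From mathcomp Require Import mpoly.
From mathcomp Require Import ring.
Set Implicit Arguments. Unset Strict Implicit. Unset Printing Implicit Defensive.
Import Order.TTheory GRing.Theory.
Local Open Scope ring_scope.

Definition i0 : 'I_4 := @Ordinal 4 0 isT.
Definition i1 : 'I_4 := @Ordinal 4 1 isT.
Definition i2 : 'I_4 := @Ordinal 4 2 isT.
Definition i3 : 'I_4 := @Ordinal 4 3 isT.

Lemma ord4P (i : 'I_4) : i = i0 \/ i = i1 \/ i = i2 \/ i = i3.
Proof.
case: i => [[|[|[|[|m]]]] H].
- by left; apply/val_inj.
- by right; left; apply/val_inj.
- by right; right; left; apply/val_inj.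
- by right; right; right; apply/val_inj.
- by [].
Qed.

Ltac fix_ord o :=
  let v := eval compute in (nat_of_ord o) in
  match v with
  | 0%N => rewrite (_ : o = i0); last by apply/val_inj
  | 1%N => rewrite (_ : o = i1); last by apply/val_inj
  | 2%N => rewrite (_ : o = i2); last by apply/val_inj
  | 3%N => rewrite (_ : o = i3); last by apply/val_inj
  end.
Ltac fixX := repeat match goal with |- context [ @mpolyX 4 _ U_(?o) ] =>
  lazymatch o with i0 => fail | i1 => fail | i2 => fail | i3 => fail | _ => fix_ord o end end.

Section Gen.
Variable R : comNzRingType.
Implicit Types (c : R) (v a z d x : 'I_4 -> R).

Definition S1 v := v i0 + v i1 + v i2 + v i3.
Definition S3 v := v i0*v i1*v i2 + v i0*v i1*v i3 + v i0*v i2*v i3 + v i1*v i2*v i3.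
Definition S4 v := v i0*v i1*v i2*v i3.
Definition L3 a z := z i0*(a i1*a i2 + a i1*a i3 + a i2*a i3)
  + z i1*(a i0*a i2 + a i0*a i3 + a i2*a i3)
  + z i2*(a i0*a i1 + a i0*a i3 + a i1*a i3)
  + z i3*(a i0*a i1 + a i0*a i2 + a i1*a i2).
Definition C4 a z := z i0*a i1*a i2*a i3 + a i0*z i1*a i2*a i3
  + a i0*a i1*z i2*a i3 + a i0*a i1*a i2*z i3.
Definition P4 a z := z i0*z i1*a i2*a i3 + z i0*z i2*a i1*a i3 + z i0*z i3*a i1*a i2
  + z i1*z i2*a i0*a i3 + z i1*z i3*a i0*a i2 + z i2*z i3*a i0*a i1.
Definition FF c v := c * (S1 v * S3 v) + S4 v.
Definition DFF c x d := c * (S1 d * S3 x + S1 x * L3 x d) + C4 x d.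
Definition E1 c a z := c * (S1 a * L3 a z + S1 z * S3 a) + C4 a z.
Definition E2 c a z := c * (S1 a * L3 z a + S1 z * L3 a z) + P4 a z.
Definition E3 c a z := c * (S1 a * S3 z + S1 z * L3 z a) + C4 z a.
Definition addv a z := fun i => a i + z i.
Definition dE2 c a z d := E2 c a (addv z d) - E2 c a z - E2 c a d.

Lemma FF_split c a z :
  FF c (addv a z) = FF c a + E1 c a z + E2 c a z + E3 c a z + FF c z.
Proof. rewrite /FF /E1 /E2 /E3 /S1 /S3 /S4 /L3 /C4 /P4 /addv. ring. Qed.

Lemma FF_ext c v v' : v =1 v' -> FF c v = FF c v'.
Proof. by move=> h; rewrite /FF /S1 /S3 /S4 !h. Qed.
Lemma DFF_ext c v v' d d' : v =1 v' -> d =1 d' -> DFF c v d = DFF c v' d'.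
Proof. by move=> h h'; rewrite /DFF /S1 /S3 /L3 /C4 !h !h'. Qed.
Lemma E2_ext c v v' d d' : v =1 v' -> d =1 d' -> E2 c v d = E2 c v' d'.
Proof. by move=> h h'; rewrite /E2 /S1 /L3 /P4 !h !h'. Qed.
Lemma dE2_ext c v v' y y' d d' : v =1 v' -> y =1 y' -> d =1 d' ->
  dE2 c v y d = dE2 c v' y' d'.
Proof.
move=> h h1 h2; rewrite /dE2 (E2_ext c h h1) (E2_ext c h h2); congr (_ - _ - _).
by apply: E2_ext => // i; rewrite /addv h1 h2.
Qed.

End Gen.

Lemma FF_morph (R S : comNzRingType) (f : {rmorphism R -> S}) c v :
  f (FF c v) = FF (f c) (fun i => f (v i)).
Proof. by rewrite /FF /S1 /S3 /S4 !(rmorphD, rmorphM). Qed.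
Lemma E2_morph (R S : comNzRingType) (f : {rmorphism R -> S}) c v z :
  f (E2 c v z) = E2 (f c) (fun i => f (v i)) (fun i => f (z i)).
Proof. by rewrite /E2 /S1 /L3 /P4 !(rmorphD, rmorphM). Qed.
Lemma dE2_morph (R S : comNzRingType) (f : {rmorphism R -> S}) c v z d :
  f (dE2 c v z d) = dE2 (f c) (fun i => f (v i)) (fun i => f (z i)) (fun i => f (d i)).
Proof.
rewrite /dE2 !rmorphB !E2_morph; congr (_ - _ - _).
by apply: E2_ext => // i; rewrite /addv rmorphD.
Qed.
Lemma DFF_morph (R S : comNzRingType) (f : {rmorphism R -> S}) c v d :
  f (DFF c v d) = DFF (f c) (fun i => f (v i)) (fun i => f (d i)).
Proof. by rewrite /DFF /S1 /S3 /L3 /C4 !(rmorphD, rmorphM). Qed.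

Definition ev (i : 'I_4) (K : nzRingType) : 'I_4 -> K := fun k => ((k == i) : nat)%:R.

Section MP.
Variables (K : fieldType) (c : K).
Local Notation MP := {mpoly K[4]}.
Definition XX : 'I_4 -> MP := fun i => 'X_i.

Lemma mwX n (i : 'I_n) : mwiden ('X_i : {mpoly K[n]}) = 'X_(widen_ord (leqnSn n) i).
Proof. by rewrite mwidenX mnmwiden1. Qed.
Lemma mesym3_4 : mesym 4 K 3 = 'X_i0*'X_i1*'X_i2 + 'X_i0*'X_i1*'X_i3 + 'X_i0*'X_i2*'X_i3 + 'X_i1*'X_i2*'X_i3.
Proof.
rewrite (mesymSS K 3 2) (mesymSS K 2 1) (mesymSS K 1 0) !mesymnnE mesym0E.
rewrite !big_ord_recl !big_ord0 !mulr1 !(mwidenD, mwidenM, mwiden1, mwX) mul1r.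
fixX. ring.
Qed.
Lemma mesym1_4 : mesym 4 K 1 = 'X_i0 + 'X_i1 + 'X_i2 + 'X_i3.
Proof. rewrite mesym1E !big_ord_recl big_ord0 addr0. fixX. ring. Qed.
Lemma mesym4_4 : mesym 4 K 4 = 'X_i0 * 'X_i1 * 'X_i2 * 'X_i3.
Proof. rewrite mesymnnE !big_ord_recl big_ord0 mulr1. fixX. ring. Qed.

Lemma Xc_polyE : Xc_poly c = FF c%:MP XX.
Proof.
rewrite /Xc_poly mesym1_4 mesym3_4 mesym4_4 -mul_mpolyC /FF /S1 /S3 /S4 /XX. ring.
Qed.

Lemma mderivXU (k i : 'I_4) : ('X_k : MP)^`M(i) = (((k == i) : nat)%:R)%:MP.
Proof.
rewrite mderivX mnm1E; case: eqP => [->|_].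
  rewrite (_ : (U_(i) - U_(i))%MM = 0%MM); last first.
    by apply/mnmP=> j; rewrite mnmBE subnn mnm0E.
  by rewrite mpolyX0 scale1r.
by rewrite scale0r.
Qed.

Lemma FF_deriv (x : 'I_4 -> MP) i :
  (FF c%:MP x)^`M(i) = DFF c%:MP x (fun k => (x k)^`M(i)).
Proof.
rewrite /FF /DFF /S1 /S3 /S4 /L3 /C4 !(mderivD, mderivM) mderivC. ring.
Qed.

Lemma E2_deriv (a z : 'I_4 -> MP) i : (forall k, (a k)^`M(i) = 0) ->
  (E2 c%:MP a z)^`M(i) = dE2 c%:MP a z (fun k => (z k)^`M(i)).
Proof.
move=> ha; rewrite /dE2 /E2 /S1 /L3 /P4 /addv !(mderivD, mderivM) mderivC !ha. ring.
Qed.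

Lemma Xc_eval (v : 'I_4 -> K) : (Xc_poly c).@[v] = FF c v.
Proof.
rewrite Xc_polyE.
have -> : (FF c%:MP XX).@[v] = FF (c%:MP.@[v]) (fun i => (XX i).@[v]) := FF_morph (meval v) _ _.
rewrite mevalC; apply: FF_ext => i; exact: mevalXU.
Qed.

Lemma Xc_deriv_eval (v : 'I_4 -> K) i : ((Xc_poly c)^`M(i)).@[v] = DFF c v (ev i K).
Proof.
rewrite Xc_polyE FF_deriv.
set d := (fun k => _).
have -> : (DFF c%:MP XX d).@[v] = DFF (c%:MP.@[v]) (fun i => (XX i).@[v]) (fun i => (d i).@[v]) := DFF_morph (meval v) _ _ _.
rewrite mevalC; apply: DFF_ext => k.
  exact: mevalXU.
by rewrite /d /XX mderivXU mevalC.
Qed.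
End MP.

Section Sing.
Variables (K : fieldType) (hchar : 2%N \in [pchar K]) (c : K) (hc : c != 0).

Definition vec (x0 x1 x2 x3 : K) : 'I_4 -> K := fun i =>
  match val i with 0%N => x0 | 1%N => x1 | 2%N => x2 | _ => x3 end.
Definition eA (k : 'I_4) : 'I_4 -> K := fun i => ((val i == val k) : nat)%:R.
Definition eB (k l : 'I_4) : 'I_4 -> K :=
  fun i => (((val i == val k) || (val i == val l)) : nat)%:R.

Lemma two0 : (2 : K) = 0.
Proof. exact: (pcharf0 hchar). Qed.

Lemma ch2eq (x y : K) : x + y = 0 -> y = x.
Proof. by move=> h; apply/eqP; rewrite -subr_eq0 (oppr_pchar2 hchar) addrC h. Qed.

Lemma prod3 (a b d : K) : a != 0 -> b != 0 -> c * (a * b * d) = 0 -> d = 0.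
Proof.
move=> ha hb /eqP; rewrite !mulf_eq0 (negbTE hc) (negbTE ha) (negbTE hb) /=.
by move/eqP.
Qed.

Definition G0 (x : 'I_4 -> K) := c*((x i1 + x i2)*(x i1 + x i3)*(x i2 + x i3)) + x i1*x i2*x i3.
Definition G1 (x : 'I_4 -> K) := c*((x i0 + x i2)*(x i0 + x i3)*(x i2 + x i3)) + x i0*x i2*x i3.
Definition G2 (x : 'I_4 -> K) := c*((x i0 + x i1)*(x i0 + x i3)*(x i1 + x i3)) + x i0*x i1*x i3.
Definition G3 (x : 'I_4 -> K) := c*((x i0 + x i1)*(x i0 + x i2)*(x i1 + x i2)) + x i0*x i1*x i2.

Lemma DFF_G0 x : DFF c x (ev i0 K) = G0 x.
Proof.
transitivity (G0 x + 2 * (c * (x i1 * x i2 * x i3 + x i0 * (x i1*x i2 + x i1*x i3 + x i2*x i3)))).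
  rewrite /DFF /G0 /S1 /S3 /L3 /C4 /ev /=; ring.
by rewrite two0 mul0r addr0.
Qed.
Lemma DFF_G1 x : DFF c x (ev i1 K) = G1 x.
Proof.
transitivity (G1 x + 2 * (c * (x i0 * x i2 * x i3 + x i1 * (x i0*x i2 + x i0*x i3 + x i2*x i3)))).
  rewrite /DFF /G1 /S1 /S3 /L3 /C4 /ev /=; ring.
by rewrite two0 mul0r addr0.
Qed.
Lemma DFF_G2 x : DFF c x (ev i2 K) = G2 x.
Proof.
transitivity (G2 x + 2 * (c * (x i0 * x i1 * x i3 + x i2 * (x i0*x i1 + x i0*x i3 + x i1*x i3)))).
  rewrite /DFF /G2 /S1 /S3 /L3 /C4 /ev /=; ring.
by rewrite two0 mul0r addr0.
Qed.
Lemma DFF_G3 x : DFF c x (ev i3 K) = G3 x.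
Proof.
transitivity (G3 x + 2 * (c * (x i0 * x i1 * x i2 + x i3 * (x i0*x i1 + x i0*x i2 + x i1*x i2)))).
  rewrite /DFF /G3 /S1 /S3 /L3 /C4 /ev /=; ring.
by rewrite two0 mul0r addr0.
Qed.

Lemma nz3 (a b d : K) : a != 0 -> b != 0 -> d != 0 -> a * b * d != 0.
Proof. by move=> *; rewrite !mulf_neq0. Qed.

Ltac finB := let i := fresh "i" in intro i; case: (ord4P i) => [->|[->|[->|->]]]; rewrite /eA /eB /vec /=; ring.

Lemma sing_fwd x0 x1 x2 x3 :
  ~~ [&& x0 == 0, x1 == 0, x2 == 0 & x3 == 0] ->
  G0 (vec x0 x1 x2 x3) = 0 -> G1 (vec x0 x1 x2 x3) = 0 ->
  G2 (vec x0 x1 x2 x3) = 0 -> G3 (vec x0 x1 x2 x3) = 0 ->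
  (exists k, proj_eq (vec x0 x1 x2 x3) (eA k)) \/
  (exists k l, k != l /\ proj_eq (vec x0 x1 x2 x3) (eB k l)).
Proof.
rewrite /G0 /G1 /G2 /G3 /vec /= => nz hG0 hG1 hG2 hG3.
have [e0|n0] := eqVneq x0 0; have [e1|n1] := eqVneq x1 0;
have [e2|n2] := eqVneq x2 0; have [e3|n3] := eqVneq x3 0.
- by move: nz; rewrite e0 e1 e2 e3 eqxx.
- by left; exists i3, x3; split => //; subst; finB.
- by left; exists i2, x2; split => //; subst; finB.
-
  subst; have /(prod3 n2 n3)/ch2eq e : c * (x2 * x3 * (x2 + x3)) = 0 by rewrite -hG0; ring.
  by subst; right; exists i2, i3; split => //; exists x2; split => //; finB.
- by left; exists i1, x1; split => //; subst; finB.
- subst; have /(prod3 n1 n3)/ch2eq e : c * (x1 * x3 * (x1 + x3)) = 0 by rewrite -hG0; ring.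
  by subst; right; exists i1, i3; split => //; exists x1; split => //; finB.
- subst; have /(prod3 n1 n2)/ch2eq e : c * (x1 * x2 * (x1 + x2)) = 0 by rewrite -hG0; ring.
  by subst; right; exists i1, i2; split => //; exists x1; split => //; finB.
-
  subst; have /(prod3 n2 n3)/ch2eq e : c * (x2 * x3 * (x2 + x3)) = 0 by rewrite -hG1; ring.
  subst; have /(prod3 n1 n2)/ch2eq e : c * (x1 * x2 * (x1 + x2)) = 0 by rewrite -hG3; ring.
  subst; have : x1 * x1 * x1 = 0 by rewrite -hG0 !(addrr_pchar2 hchar); ring.
  by move/eqP; rewrite (negbTE (nz3 n1 n1 n1)).
- by left; exists i0, x0; split => //; subst; finB.
- subst; have /(prod3 n0 n3)/ch2eq e : c * (x0 * x3 * (x0 + x3)) = 0 by rewrite -hG1; ring.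
  by subst; right; exists i0, i3; split => //; exists x0; split => //; finB.
- subst; have /(prod3 n0 n2)/ch2eq e : c * (x0 * x2 * (x0 + x2)) = 0 by rewrite -hG1; ring.
  by subst; right; exists i0, i2; split => //; exists x0; split => //; finB.
-
  subst; have /(prod3 n2 n3)/ch2eq e : c * (x2 * x3 * (x2 + x3)) = 0 by rewrite -hG0; ring.
  subst; have /(prod3 n0 n2)/ch2eq e : c * (x0 * x2 * (x0 + x2)) = 0 by rewrite -hG3; ring.
  subst; have : x0 * x0 * x0 = 0 by rewrite -hG1 !(addrr_pchar2 hchar); ring.
  by move/eqP; rewrite (negbTE (nz3 n0 n0 n0)).
- subst; have /(prod3 n0 n1)/ch2eq e : c * (x0 * x1 * (x0 + x1)) = 0 by rewrite -hG2; ring.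
  by subst; right; exists i0, i1; split => //; exists x0; split => //; finB.
-
  subst; have /(prod3 n1 n3)/ch2eq e : c * (x1 * x3 * (x1 + x3)) = 0 by rewrite -hG0; ring.
  subst; have /(prod3 n0 n1)/ch2eq e : c * (x0 * x1 * (x0 + x1)) = 0 by rewrite -hG3; ring.
  subst; have : x0 * x0 * x0 = 0 by rewrite -hG2 !(addrr_pchar2 hchar); ring.
  by move/eqP; rewrite (negbTE (nz3 n0 n0 n0)).
-
  subst; have /(prod3 n1 n2)/ch2eq e : c * (x1 * x2 * (x1 + x2)) = 0 by rewrite -hG0; ring.
  subst; have /(prod3 n0 n1)/ch2eq e : c * (x0 * x1 * (x0 + x1)) = 0 by rewrite -hG2; ring.
  subst; have : x0 * x0 * x0 = 0 by rewrite -hG3 !(addrr_pchar2 hchar); ring.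
  by move/eqP; rewrite (negbTE (nz3 n0 n0 n0)).
-
  exfalso.
  have d01 : x0 + x1 != 0.
    apply/eqP => h; have : x0*x1*x3 = 0 by rewrite -hG2 h; ring.
    by move/eqP; rewrite (negbTE (nz3 n0 n1 n3)).
  have d02 : x0 + x2 != 0.
    apply/eqP => h; have : x0*x2*x3 = 0 by rewrite -hG1 h; ring.
    by move/eqP; rewrite (negbTE (nz3 n0 n2 n3)).
  have d03 : x0 + x3 != 0.
    apply/eqP => h; have : x0*x2*x3 = 0 by rewrite -hG1 h; ring.
    by move/eqP; rewrite (negbTE (nz3 n0 n2 n3)).
  have d12 : x1 + x2 != 0.
    apply/eqP => h; have : x1*x2*x3 = 0 by rewrite -hG0 h; ring.
    by move/eqP; rewrite (negbTE (nz3 n1 n2 n3)).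
  have d13 : x1 + x3 != 0.
    apply/eqP => h; have : x1*x2*x3 = 0 by rewrite -hG0 h; ring.
    by move/eqP; rewrite (negbTE (nz3 n1 n2 n3)).
  have d23 : x2 + x3 != 0.
    apply/eqP => h; have : x1*x2*x3 = 0 by rewrite -hG0 h; ring.
    by move/eqP; rewrite (negbTE (nz3 n1 n2 n3)).
  set D := (x0+x1)*(x0+x2)*(x0+x3)*(x1+x2)*(x1+x3)*(x2+x3).
  set P := x0*x1*x2*x3.
  set S := x0+x1+x2+x3.
  set T := x0*x1*x2 + x0*x1*x3 + x0*x2*x3 + x1*x2*x3.
  have e0 : c*D*x0 + P*(S*x0^+2 + T) = 0.
    by rewrite -(mulr0 (x0*((x0+x1)*(x0+x2)*(x0+x3)))) -hG0 /D /P /S /T; ring.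
  have e1 : c*D*x1 + P*(S*x1^+2 + T) = 0.
    by rewrite -(mulr0 (x1*((x0+x1)*(x1+x2)*(x1+x3)))) -hG1 /D /P /S /T; ring.
  have e2 : c*D*x2 + P*(S*x2^+2 + T) = 0.
    by rewrite -(mulr0 (x2*((x0+x2)*(x1+x2)*(x2+x3)))) -hG2 /D /P /S /T; ring.
  have f01 : (x0 - x1) * (c*D + P*S*(x0+x1)) = 0.
    have -> : (x0 - x1) * (c*D + P*S*(x0+x1)) =
      (c*D*x0 + P*(S*x0^+2 + T)) - (c*D*x1 + P*(S*x1^+2 + T)) by ring.
    by rewrite e0 e1 subrr.
  have f02 : (x0 - x2) * (c*D + P*S*(x0+x2)) = 0.
    have -> : (x0 - x2) * (c*D + P*S*(x0+x2)) =
      (c*D*x0 + P*(S*x0^+2 + T)) - (c*D*x2 + P*(S*x2^+2 + T)) by ring.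
    by rewrite e0 e2 subrr.
  move/eqP: f01; rewrite mulf_eq0 (oppr_pchar2 hchar) (negbTE d01) /= => /eqP g01.
  move/eqP: f02; rewrite mulf_eq0 (oppr_pchar2 hchar) (negbTE d02) /= => /eqP g02.
  have h : (x1 - x2) * (P*S) = 0.
    have -> : (x1 - x2) * (P*S) = (c*D + P*S*(x0+x1)) - (c*D + P*S*(x0+x2)) by ring.
    by rewrite g01 g02 subrr.
  move/eqP: h; rewrite mulf_eq0 (oppr_pchar2 hchar) (negbTE d12) /= => /eqP h.
  move: g01; rewrite h mul0r addr0 => /eqP.
  by apply/negP; rewrite /D !mulf_neq0.
Qed.

Lemma DFF_G x i : DFF c x (ev i K) =
  match val i with 0%N => G0 x | 1%N => G1 x | 2%N => G2 x | _ => G3 x end.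
Proof.
case: (ord4P i) => [->|[->|[->|->]]]; [exact: DFF_G0 | exact: DFF_G1 | exact: DFF_G2 | exact: DFF_G3].
Qed.

Lemma sing_bwdA v k : proj_eq v (eA k) -> FF c v = 0 /\ forall i, DFF c v (ev i K) = 0.
Proof.
case=> a [_ hv]; split.
  rewrite /FF /S1 /S3 /S4 !hv; case: (ord4P k) => [->|[->|[->|->]]]; rewrite /eA /=; ring.
move=> i; rewrite DFF_G; case: (ord4P i) => [->|[->|[->|->]]]; rewrite /= /G0 /G1 /G2 /G3 !hv;
  case: (ord4P k) => [->|[->|[->|->]]]; rewrite /eA /= ?(addrr_pchar2 hchar); ring.
Qed.

Lemma sing_bwdB v k l : k != l -> proj_eq v (eB k l) ->
  FF c v = 0 /\ forall i, DFF c v (ev i K) = 0.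
Proof.
move=> kl; case=> a [_ hv]; split.
  rewrite /FF /S1 /S3 /S4 !hv;
  case: (ord4P k) kl => [->|[->|[->|->]]]; case: (ord4P l) => [->|[->|[->|->]]] // _; rewrite /eB /=; ring.
move=> i; rewrite DFF_G; case: (ord4P i) => [->|[->|[->|->]]]; rewrite /= /G0 /G1 /G2 /G3 !hv;
  case: (ord4P k) kl => [->|[->|[->|->]]]; case: (ord4P l) => [->|[->|[->|->]]] // _;
  rewrite /eB /= ?(addrr_pchar2 hchar); ring.
Qed.

Lemma vecE (v : 'I_4 -> K) : v =1 vec (v i0) (v i1) (v i2) (v i3).
Proof. by move=> i; case: (ord4P i) => [->|[->|[->|->]]]. Qed.

Lemma proj_eq_ext (u u' w : 'I_4 -> K) : u =1 u' -> proj_eq u w -> proj_eq u' w.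
Proof. by move=> h [a [ha hw]]; exists a; split => // i; rewrite -h. Qed.

Lemma sing_iff_scalar (v : 'I_4 -> K) : nonzero_vec v ->
  (FF c v = 0 /\ forall i, DFF c v (ev i K) = 0) <->
  ((exists k, proj_eq v (eA k)) \/ (exists k l, k != l /\ proj_eq v (eB k l))).
Proof.
move=> nz; split; last first.
  by case=> [[k hk]|[k [l [kl h]]]]; [exact: sing_bwdA hk | exact: sing_bwdB h].
case=> _ hD.
have hv := vecE v.
have g0 : G0 (vec (v i0) (v i1) (v i2) (v i3)) = 0 by rewrite -(hD i0) DFF_G0.
have g1 : G1 (vec (v i0) (v i1) (v i2) (v i3)) = 0 by rewrite -(hD i1) DFF_G1.
have g2 : G2 (vec (v i0) (v i1) (v i2) (v i3)) = 0 by rewrite -(hD i2) DFF_G2.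
have g3 : G3 (vec (v i0) (v i1) (v i2) (v i3)) = 0 by rewrite -(hD i3) DFF_G3.
have nz' : ~~ [&& v i0 == 0, v i1 == 0, v i2 == 0 & v i3 == 0].
  case: nz => i; case: (ord4P i) => [->|[->|[->|->]]] /negbTE ->; by rewrite ?andbF.
have hv' : vec (v i0) (v i1) (v i2) (v i3) =1 v by move=> i; rewrite -hv.
case: (sing_fwd nz' g0 g1 g2 g3) => [[k hk]|[k [l [kl hk]]]].
  by left; exists k; exact: proj_eq_ext hv' hk.
by right; exists k, l; split => //; exact: proj_eq_ext hv' hk.
Qed.
End Sing.

Section NodeScalar.
Variables (K : fieldType) (hchar : 2%N \in [pchar K]) (c : K) (hc : c != 0).

Lemma caa_neq0 (a : K) : a != 0 -> c * (a * a) != 0.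
Proof. by move=> ha; rewrite !mulf_neq0. Qed.

Lemma mul_eq0_l (u w : K) : u != 0 -> u * w = 0 -> w = 0.
Proof. by move=> hu /eqP; rewrite mulf_eq0 (negbTE hu) => /eqP. Qed.

Lemma LA (a y1 y2 y3 : K) : a != 0 ->
  c*(a*a)*(y2+y3) = 0 -> c*(a*a)*(y1+y3) = 0 ->
  c*(a*a)*(y1*y2 + y1*y3 + y2*y3) = 0 -> y1 = 0 /\ y2 = 0 /\ y3 = 0.
Proof.
move=> ha H1 H2 H0; have hca := caa_neq0 ha.
have e23 := ch2eq hchar (mul_eq0_l hca H1); subst y3.
have e12 := ch2eq hchar (mul_eq0_l hca H2); subst y2.
have : y1 * y1 + 2 * (y1 * y1) = 0.
  by apply: (mul_eq0_l hca); rewrite -H0; ring.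
rewrite (two0 hchar) mul0r addr0 => /eqP; rewrite mulf_eq0 orbb => /eqP ->.
by [].
Qed.

Lemma LB (a y1 y2 y3 : K) : a != 0 ->
  c*(a*a)*(y2+y3) = 0 ->
  c*(a*a)*((y2+y3) + (y1+y2+y3)) + a*a*y3 = 0 ->
  c*(a*a)*((y1+y2+y3)*(y2+y3)) + a*a*(y2*y3) = 0 -> y1 = 0 /\ y2 = 0 /\ y3 = 0.
Proof.
move=> ha H1 H2 H0; have hca := caa_neq0 ha.
have haa : a * a != 0 by rewrite mulf_neq0.
have e23 := ch2eq hchar (mul_eq0_l hca H1); subst y3.
have : a*a*(y2*y2) + 2*(c*(a*a)*((y1+y2+y2)*y2)) = 0 by rewrite -H0; ring.
rewrite (two0 hchar) mul0r addr0 => /(mul_eq0_l haa) /eqP; rewrite mulf_eq0 orbb => /eqP e2.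
subst y2; split => //.
have : c*(a*a)*y1 = 0 by rewrite -H2; ring.
by move/(mul_eq0_l hca).
Qed.
End NodeScalar.

Section NodeCases.
Variables (K : fieldType) (hchar : 2%N \in [pchar K]) (c : K) (hc : c != 0).

Ltac doA hv hy hE hD ha y m1 m2 m3 :=
  let H1 := fresh "H1" in let H2 := fresh "H2" in
  let r1 := fresh "r" in let r2 := fresh "r" in let r3 := fresh "r" in
  have H1 := hD m1 isT; have H2 := hD m2 isT;
  move: hE H1 H2; rewrite /dE2 /E2 /S1 /L3 /P4 /addv /ev !hv /eA /= hy => hE H1 H2;
  have [r1 [r2 r3]] := LA hchar hc (y1:=y m1) (y2:=y m2) (y3:=y m3) ha
     ltac:(rewrite -H1; ring) ltac:(rewrite -H2; ring) ltac:(rewrite -hE; ring);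
  let i := fresh "i" in move=> i; case: (ord4P i) => [->|[->|[->|->]]] //.

Lemma node_scalarA (v y : 'I_4 -> K) k : proj_eq v (eA K k) -> y k = 0 -> E2 c v y = 0 ->
  (forall i, i != k -> dE2 c v y (ev i K) = 0) -> forall i, y i = 0.
Proof.
case=> a [ha hv] hy hE hD.
case: (ord4P k) hv hy hD => [->|[->|[->|->]]] hv hy hD.
- doA hv hy hE hD ha y i1 i2 i3.
- doA hv hy hE hD ha y i0 i2 i3.
- doA hv hy hE hD ha y i0 i1 i3.
- doA hv hy hE hD ha y i0 i1 i2.
Qed.

Ltac doB v a hv hy hE hD ha y m p q :=
  let H1 := fresh "H1" in let H2 := fresh "H2" in let hS := fresh "hS" in
  let r1 := fresh "r" in let r2 := fresh "r" in let r3 := fresh "r" in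
  have hS : S1 v = 0;
    [by rewrite /S1 !hv /eB /=; transitivity (2 * a); [ring | by rewrite (two0 hchar) mul0r] |];
  have H1 := hD m isT; have H2 := hD p isT;
  move: hE H1 H2; rewrite /dE2 /E2 hS /S1 /L3 /P4 /addv /ev !hv /eB /= hy => hE H1 H2;
  have [r1 [r2 r3]] := LB hchar hc (y1:=y m) (y2:=y p) (y3:=y q) ha
     ltac:(rewrite -H1; ring) ltac:(rewrite -H2; ring) ltac:(rewrite -hE; ring);
  let i := fresh "i" in move=> i; case: (ord4P i) => [->|[->|[->|->]]] //.

Lemma node_scalarB (v y : 'I_4 -> K) k l : k != l -> proj_eq v (eB K k l) -> y k = 0 ->
  E2 c v y = 0 ->
  (forall i, i != k -> dE2 c v y (ev i K) = 0) -> forall i, y i = 0.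
Proof.
move=> kl; case=> a [ha hv] hy hE hD.
case: (ord4P k) kl hv hy hD => [->|[->|[->|->]]];
case: (ord4P l) => [->|[->|[->|->]]] // _ hv hy hD.
- doB v a hv hy hE hD ha y i1 i2 i3.
- doB v a hv hy hE hD ha y i2 i1 i3.
- doB v a hv hy hE hD ha y i3 i1 i2.
- doB v a hv hy hE hD ha y i0 i2 i3.
- doB v a hv hy hE hD ha y i2 i0 i3.
- doB v a hv hy hE hD ha y i3 i0 i2.
- doB v a hv hy hE hD ha y i0 i1 i3.
- doB v a hv hy hE hD ha y i1 i0 i3.
- doB v a hv hy hE hD ha y i3 i0 i1.
- doB v a hv hy hE hD ha y i0 i1 i2.
- doB v a hv hy hE hD ha y i1 i0 i2.
- doB v a hv hy hE hD ha y i2 i0 i1.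
Qed.
End NodeCases.

Section HP.
Variables (K : fieldType) (n : nat).
Lemma hpartE d (p : {mpoly K[n]}) m :
  (hpart d p)@_m = if mdeg m == d then p@_m else 0.
Proof.
rewrite /hpart raddf_sum /=.
under eq_bigr => m' _ do rewrite mcoeffZ mcoeffX.
case: (boolP (m \in msupp p)) => hm.
  rewrite (big_rem m) //= eqxx mulr1 big1_seq ?addr0 //.
  move=> y /andP [_ hy]; have : y != m.
    by move: hy; rewrite (mem_rem_uniq _ (msupp_uniq p)) inE => /andP [].
  by move/negbTE ->; rewrite mulr0.
rewrite big1_seq ?(memN_msupp_eq0 hm); first by case: ifP.
move=> y /andP [_ hy]; have : y != m by apply: contraNneq hm => <-.
by move/negbTE ->; rewrite mulr0.
Qed.

Lemma hpart2_split (e0 e1 e2 e3 e4 : {mpoly K[n]}) :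
  e0 \is 0.-homog -> e1 \is 1.-homog -> e2 \is 2.-homog -> e3 \is 3.-homog ->
  e4 \is 4.-homog -> hpart 2 (e0 + e1 + e2 + e3 + e4) = e2.
Proof.
move=> h0 h1 h2 h3 h4; apply/mpolyP => m; rewrite hpartE !mcoeffD.
case: eqP => hm; last by rewrite (dhomog_nemf_coeff h2) //; apply/eqP.
have n0 : mdeg m != 0%N by rewrite hm.
have n1 : mdeg m != 1%N by rewrite hm.
have n3 : mdeg m != 3%N by rewrite hm.
have n4 : mdeg m != 4%N by rewrite hm.
rewrite (dhomog_nemf_coeff h0 n0) (dhomog_nemf_coeff h1 n1).
rewrite (dhomog_nemf_coeff h3 n3) (dhomog_nemf_coeff h4 n4).
ring.
Qed.

Lemma homM (p q : {mpoly K[n]}) d1 d2 d : p \is d1.-homog -> q \is d2.-homog ->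
  d = (d1 + d2)%N -> p * q \is d.-homog.
Proof. by move=> hp hq ->; apply: dhomogM. Qed.

Lemma homC (x : K) : (x%:MP : {mpoly K[n]}) \is 0.-homog.
Proof. by rewrite -[x%:MP]mulr1 mul_mpolyC; apply: dhomogZ; exact: dhomog1. Qed.
End HP.

Section TQ.
Variables (K : fieldType) (c : K).
Local Notation MP := {mpoly K[4]}.

Definition zz (j : 'I_4) : 'I_4 -> MP := fun k => if k == j then 0 else 'X_k.
Definition aa (v : 'I_4 -> K) : 'I_4 -> MP := fun k => (v k)%:MP.

Lemma compX (f : 'I_4 -> MP) (i : 'I_4) : 'X_i \mPo [tuple f k | k < 4] = f i.
Proof. by rewrite comp_mpolyXU -tnth_nth tnth_mktuple. Qed.

Lemma translateE v : translate (Xc_poly c) v = FF c%:MP (addv (aa v) (@XX K)).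
Proof.
rewrite /translate Xc_polyE.
set t := [tuple _ | i < 4].
have -> : (FF c%:MP (@XX K)) \mPo t = FF (c%:MP \mPo t) (fun i => @XX K i \mPo t) :=
  FF_morph (comp_mpoly t) _ _.
by rewrite comp_mpolyC; apply: FF_ext => i; rewrite /XX compX.
Qed.

Lemma restrictE v j : restrict_chart j (FF c%:MP (addv (aa v) (@XX K))) = FF c%:MP (addv (aa v) (zz j)).
Proof.
rewrite /restrict_chart.
set t := [tuple _ | i < 4].
have -> : (FF c%:MP (addv (aa v) (@XX K))) \mPo t =
   FF (c%:MP \mPo t) (fun i => addv (aa v) (@XX K) i \mPo t) :=
  FF_morph (comp_mpoly t) _ _.
rewrite comp_mpolyC; apply: FF_ext => i.
by rewrite /addv /aa /XX comp_mpolyD comp_mpolyC compX.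
Qed.

Lemma hom_aa v k : aa v k \is 0.-homog.
Proof. exact: homC. Qed.
Lemma hom_zz j k : zz j k \is 1.-homog.
Proof. rewrite /zz; case: eqP => _; first exact: dhomog0. rewrite dhomogX; apply/eqP; exact: mdeg1. Qed.
Lemma hom_c : (c%:MP : MP) \is 0.-homog.
Proof. exact: homC. Qed.

Ltac pdeg t :=
  lazymatch t with
  | ?x + ?y => pdeg x
  | ?x * ?y => let a := pdeg x in let b := pdeg y in constr:((a + b)%N)
  | aa _ _ => constr:(0%N)
  | mpolyC _ _ => constr:(0%N)
  | zz _ _ => constr:(1%N)
  end.
Ltac homt :=
  lazymatch goal with
  | |- is_true (_ \in _) => idtac
  end;
  lazymatch goal with
  | |- is_true ((?x + ?y) \in _) => apply: dhomogD; homt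
  | |- is_true ((?x * ?y) \in _) => let a := pdeg x in let b := pdeg y in
       apply: (@homM _ _ _ _ a b); [homt|homt|done]
  | |- is_true (aa _ _ \in _) => apply: hom_aa
  | |- is_true (mpolyC _ _ \in _) => apply: homC
  | |- is_true (zz _ _ \in _) => apply: hom_zz
  end.

Lemma tqE v j : tangent_quadric (Xc_poly c) v j = E2 c%:MP (aa v) (zz j).
Proof.
rewrite /tangent_quadric translateE restrictE FF_split.
apply: hpart2_split.
- rewrite /FF /S1 /S3 /S4; homt.
- rewrite /E1 /S1 /S3 /L3 /C4; homt.
- rewrite /E2 /S1 /L3 /P4; homt.
- rewrite /E3 /S1 /S3 /L3 /C4; homt.
- rewrite /FF /S1 /S3 /S4; homt.
Qed.
End TQ.

Section TQ2.
Variables (K : fieldType) (c : K).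

Lemma zz_eval j (y : 'I_4 -> K) k : y j = 0 -> (zz K j k).@[y] = y k.
Proof. by move=> hy; rewrite /zz; case: eqP => [->|_]; [rewrite meval0 | exact: mevalXU]. Qed.

Lemma tq_eval v j (y : 'I_4 -> K) : y j = 0 ->
  (tangent_quadric (Xc_poly c) v j).@[y] = E2 c v y.
Proof.
move=> hy; rewrite tqE.
have -> : (E2 c%:MP (aa v) (zz K j)).@[y] =
  E2 (c%:MP.@[y]) (fun i => (aa v i).@[y]) (fun i => (zz K j i).@[y]) :=
  E2_morph (meval y) _ _ _.
rewrite mevalC; apply: E2_ext => i; first by rewrite /aa mevalC.
exact: zz_eval.
Qed.

Lemma tq_deriv_eval v j (y : 'I_4 -> K) i : y j = 0 -> i != j ->
  ((tangent_quadric (Xc_poly c) v j)^`M(i)).@[y] = dE2 c v y (ev i K).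
Proof.
move=> hy hij; rewrite tqE E2_deriv; last by move=> k; rewrite /aa mderivC.
set d := (fun k => _).
have -> : (dE2 c%:MP (aa v) (zz K j) d).@[y] =
  dE2 (c%:MP.@[y]) (fun i => (aa v i).@[y]) (fun i => (zz K j i).@[y])
      (fun i => (d i).@[y]) :=
  dE2_morph (meval y) _ _ _ _.
rewrite mevalC; apply: dE2_ext => k; first by rewrite /aa mevalC.
  exact: zz_eval.
rewrite /d /zz /ev; case: eqP => [->|_].
  by rewrite mderiv0 meval0 eq_sym (negbTE hij).
by rewrite mderivXU mevalC.
Qed.

Lemma smooth_of_scalar v j :
  (forall y : 'I_4 -> K, y j = 0 -> E2 c v y = 0 ->
     (forall i, i != j -> dE2 c v y (ev i K) = 0) -> forall i, y i = 0) ->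
  smooth_quadric (tangent_quadric (Xc_poly c) v j) j.
Proof.
move=> H.
pose j' : 'I_4 := if j == i0 then i1 else i0.
have jj' : j' != j by rewrite /j'; case: (ord4P j) => [->|[->|[->|->]]].
have key : forall y : 'I_4 -> K, y j = 0 -> nonzero_vec y ->
    (tangent_quadric (Xc_poly c) v j).@[y] = 0 ->
    (forall i, i != j -> ((tangent_quadric (Xc_poly c) v j)^`M(i)).@[y] = 0) -> False.
  move=> y hy [i0' hi] hq hd.
  have hE : E2 c v y = 0 by rewrite -(tq_eval v hy).
  have hD' : forall i, i != j -> dE2 c v y (ev i K) = 0.
    by move=> i hij; rewrite -(tq_deriv_eval v hy hij) hd.
  by move: hi; rewrite (H y hy hE hD' i0') eqxx.
split.
  apply/eqP => hq.
  apply: (key (ev j' K)).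
  - by rewrite /ev eq_sym (negbTE jj').
  - by exists j'; rewrite /ev eqxx oner_neq0.
  - by rewrite hq meval0.
  - by move=> i _; rewrite hq mderiv0 meval0.
move=> y hy hnz [hq hd]; apply: (key y) => // i _; exact: hd.
Qed.
End TQ2.

Section Main.
Variables (K : fieldType) (hchar : 2%N \in [pchar K]) (c : K) (hc : c != 0).

Lemma sing_iff (v : 'I_4 -> K) : nonzero_vec v ->
  (is_sing_pt (Xc_poly c) v <->
  ((exists k, proj_eq v (eA K k)) \/ (exists k l, k != l /\ proj_eq v (eB K k l)))).
Proof.
move=> nz; rewrite -(sing_iff_scalar hchar hc nz) /is_sing_pt Xc_eval.
split=> [[h1 h2]|[h1 h2]]; split => // i; first by rewrite -Xc_deriv_eval.
by rewrite Xc_deriv_eval.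
Qed.

Lemma proj_eq_ext2 (u w w' : 'I_4 -> K) : w =1 w' -> proj_eq u w -> proj_eq u w'.
Proof. by move=> h [a [ha hw]]; exists a; split => // i; rewrite -h. Qed.

Lemma b2R (b : bool) : (if b then 1 else 0 : K) = (b : nat)%:R.
Proof. by case: b. Qed.

Lemma permA (s : 'S_4) : permute_coords s (pt0001 K) =1 eA K (s^-1 i3)%g.
Proof.
move=> i; rewrite /permute_coords /pt0001 /eA b2R; congr ((_ : nat)%:R).
have -> : (val (s i) == 3%N) = (s i == i3) by [].
rewrite val_eqE; case: eqP => h; case: eqP => h' //; [by case: h'; rewrite -h permK | by case: h; rewrite h' permKV].
Qed.

Lemma two_le (x : 'I_4) : (2 <= val x)%N = (val x == val i2) || (val x == val i3).
Proof. by case: (ord4P x) => [->|[->|[->|->]]]. Qed.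

Lemma permB (s : 'S_4) : permute_coords s (pt0011 K) =1 eB K (s^-1 i2)%g (s^-1 i3)%g.
Proof.
move=> i; rewrite /permute_coords /pt0011 /eB b2R; congr ((_ : nat)%:R).
rewrite two_le.
have e2 : (val (s i) == val i2) = (val i == val (s^-1 i2)%g).
  rewrite !val_eqE; case: eqP => h; case: eqP => h' //; [by case: h'; rewrite -h permK | by case: h; rewrite h' permKV].
have e3 : (val (s i) == val i3) = (val i == val (s^-1 i3)%g).
  rewrite !val_eqE; case: eqP => h; case: eqP => h' //; [by case: h'; rewrite -h permK | by case: h; rewrite h' permKV].
by rewrite e2 e3.
Qed.

Lemma permB_neq (s : 'S_4) : (s^-1 i2)%g != (s^-1 i3)%g.
Proof. by rewrite (inj_eq (@perm_inj _ _)). Qed.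

Lemma existsA k : exists s : 'S_4, eA K k =1 permute_coords s (pt0001 K).
Proof.
exists (tperm k i3) => i; rewrite permA tpermV tpermR //.
Qed.

Lemma existsB k l : k != l -> exists s : 'S_4, eB K k l =1 permute_coords s (pt0011 K).
Proof.
move=> kl.
pose m := tperm i2 k i3.
pose t : 'S_4 := (tperm i2 k * tperm m l)%g.
have km : k != m.
  by rewrite /m -{1}(tpermL i2 k) (inj_eq (@perm_inj _ _)).
exists t^-1%g => i; rewrite permB invgK !permM.
have h1 : tperm m l (tperm i2 k i2) = k by rewrite tpermL tpermD // eq_sym.
have h2 : tperm m l (tperm i2 k i3) = l by rewrite -/m tpermL.
by rewrite h1 h2.


Qed.
End Main.

Definition bp (k : 'I_10) (i : 'I_4) : bool :=
  match val k with
  | 0%N => val i == 0%N | 1%N => val i == 1%N | 2%N => val i == 2%N | 3%N => val i == 3%N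
  | 4%N => (val i == 0%N) || (val i == 1%N)
  | 5%N => (val i == 0%N) || (val i == 2%N)
  | 6%N => (val i == 0%N) || (val i == 3%N)
  | 7%N => (val i == 1%N) || (val i == 2%N)
  | 8%N => (val i == 1%N) || (val i == 3%N)
  | _ => (val i == 2%N) || (val i == 3%N)
  end.

Lemma bp_inj k l : (forall i, bp k i = bp l i) -> k = l.
Proof.
move=> h; apply/val_inj; move: (h i0) (h i1) (h i2) (h i3); clear h; rewrite /bp.
case: k => [[|[|[|[|[|[|[|[|[|[|k]]]]]]]]]] hk];
case: l => [[|[|[|[|[|[|[|[|[|[|l]]]]]]]]]] hl];
  intros H0 H1 H2 H3; simpl in *; first [reflexivity | discriminate].
Qed.

Section Final.
Variables (K : fieldType) (hchar : 2%N \in [pchar K]) (c : K) (hc : c != 0).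

Definition pts (k : 'I_10) : 'I_4 -> K := fun i => ((bp k i : bool) : nat)%:R.

Ltac ord4c i := case: (ord4P i) => [->|[->|[->|->]]].

Lemma pts_eA k : exists idx, pts idx =1 eA K k.
Proof.
ord4c k.
- by exists (@Ordinal 10 0 isT) => i; ord4c i.
- by exists (@Ordinal 10 1 isT) => i; ord4c i.
- by exists (@Ordinal 10 2 isT) => i; ord4c i.
- by exists (@Ordinal 10 3 isT) => i; ord4c i.
Qed.

Lemma pts_eB k l : k != l -> exists idx, pts idx =1 eB K k l.
Proof.
ord4c k; ord4c l => // _.
- by exists (@Ordinal 10 4 isT) => i; ord4c i.
- by exists (@Ordinal 10 5 isT) => i; ord4c i.
- by exists (@Ordinal 10 6 isT) => i; ord4c i.
- by exists (@Ordinal 10 4 isT) => i; ord4c i.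
- by exists (@Ordinal 10 7 isT) => i; ord4c i.
- by exists (@Ordinal 10 8 isT) => i; ord4c i.
- by exists (@Ordinal 10 5 isT) => i; ord4c i.
- by exists (@Ordinal 10 7 isT) => i; ord4c i.
- by exists (@Ordinal 10 9 isT) => i; ord4c i.
- by exists (@Ordinal 10 6 isT) => i; ord4c i.
- by exists (@Ordinal 10 8 isT) => i; ord4c i.
- by exists (@Ordinal 10 9 isT) => i; ord4c i.
Qed.

Lemma pts_form idx : (exists k, pts idx =1 eA K k) \/ (exists k l, k != l /\ pts idx =1 eB K k l).
Proof.
case: idx => [[|[|[|[|[|[|[|[|[|[|m]]]]]]]]]] hm] //.
- by left; exists i0 => i; ord4c i.
- by left; exists i1 => i; ord4c i.
- by left; exists i2 => i; ord4c i.
- by left; exists i3 => i; ord4c i.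
- by right; exists i0, i1; split => // i; ord4c i.
- by right; exists i0, i2; split => // i; ord4c i.
- by right; exists i0, i3; split => // i; ord4c i.
- by right; exists i1, i2; split => // i; ord4c i.
- by right; exists i1, i3; split => // i; ord4c i.
- by right; exists i2, i3; split => // i; ord4c i.
Qed.

Lemma proj_eq_refl (w : 'I_4 -> K) : proj_eq w w.
Proof. by exists 1; split; [exact: oner_neq0 | move=> i; rewrite mul1r]. Qed.

Lemma nz_eA k : nonzero_vec (eA K k).
Proof. by exists k; rewrite /eA eqxx /= oner_neq0. Qed.
Lemma nz_eB k l : nonzero_vec (eB K k l).
Proof. by exists k; rewrite /eB eqxx /= oner_neq0. Qed.

Lemma nz_ext (u w : 'I_4 -> K) : u =1 w -> nonzero_vec w -> nonzero_vec u.
Proof. by move=> h [i hi]; exists i; rewrite h. Qed.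

Lemma pts_nz idx : nonzero_vec (pts idx).
Proof.
case: (pts_form idx) => [[k hk]|[k [l [_ hk]]]]; [exact: (nz_ext hk (nz_eA k)) | exact: (nz_ext hk (nz_eB k l))].
Qed.

Lemma pts_inj k l : proj_eq (pts k) (pts l) -> k = l.
Proof.
case=> a [ha h]; apply: bp_inj => i; move: (h i); rewrite /pts.
case: (bp k i); case: (bp l i) => //= e.
- by move: e; rewrite ?mulr1n ?mulr0n mulr0 => /eqP; rewrite oner_eq0.
- by move: e; rewrite ?mulr1n ?mulr0n mulr1 => /esym/eqP; rewrite (negbTE ha).
Qed.
End Final.

Lemma eB_sym (K : fieldType) k l : eB K k l =1 eB K l k.
Proof. by move=> i; rewrite /eB orbC. Qed.

Unset Implicit Arguments.
Theorem proposition4p7 (K : closedFieldType) (hchar : 2%N \in [pchar K])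
  (c : K) (hc : c != 0) :
  (forall v : 'I_4 -> K, nonzero_vec v ->
     (is_sing_pt (Xc_poly c) v <->
      exists s : 'S_4, proj_eq v (permute_coords s (pt0011 K))
                    \/ proj_eq v (permute_coords s (pt0001 K))))
  /\ (exists pts : 'I_10 -> ('I_4 -> K),
        (forall k, nonzero_vec (pts k) /\ is_sing_pt (Xc_poly c) (pts k))
        /\ (forall k l, proj_eq (pts k) (pts l) -> k = l)
        /\ (forall v : 'I_4 -> K, nonzero_vec v -> is_sing_pt (Xc_poly c) v ->
              exists k, proj_eq v (pts k)))
  /\ (forall v : 'I_4 -> K, nonzero_vec v -> is_sing_pt (Xc_poly c) v ->
        is_node (Xc_poly c) v).
Proof.
split.
  move=> v nz; rewrite (sing_iff hchar hc nz); split.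
    case=> [[k hk]|[k [l [kl hk]]]].
      have [s hs] := existsA K k; exists s; right; exact: proj_eq_ext2 hs hk.
    have [s hs] := existsB K kl; exists s; left; exact: proj_eq_ext2 hs hk.
  case=> s [h|h].
    right; exists (s^-1 i2)%g, (s^-1 i3)%g; split; first exact: permB_neq s.
    by apply: proj_eq_ext2 h => i; rewrite (permB K s).
  by left; exists (s^-1 i3)%g; apply: proj_eq_ext2 h => i; rewrite (permA K s).
split.
  exists (@pts K); split.
    move=> k; have nz := pts_nz K k; split => //; rewrite (sing_iff hchar hc nz).
    case: (pts_form K k) => [[k' hk]|[k' [l [kl hk]]]].
      by left; exists k'; apply: proj_eq_ext2 hk (proj_eq_refl _).
    by right; exists k', l; split => //; apply: proj_eq_ext2 hk (proj_eq_refl _).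
  split; first exact: pts_inj.
  move=> v nz; rewrite (sing_iff hchar hc nz); case=> [[k hk]|[k [l [kl hk]]]].
    have [idx hi] := pts_eA K k; exists idx; apply: proj_eq_ext2 hk => i; by rewrite hi.
  have [idx hi] := pts_eB K kl; exists idx; apply: proj_eq_ext2 hk => i; by rewrite hi.
move=> v nz hs; split => // j hj; apply: smooth_of_scalar => y hy hE hD.
have := hs; rewrite (sing_iff hchar hc nz); case=> [[k hk]|[k [l [kl hk]]]].
  have jk : j = k.
    apply/eqP; apply: contraNT hj => hjk; case: hk => a [_ hv].
    by rewrite hv /eA val_eqE (negbTE hjk) mulr0.
  subst j; exact: (node_scalarA hchar hc hk hy hE hD).
have [jk|jl] : j = k \/ j = l.
  case: (eqVneq j k) => [->|hjk]; first by left.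
  case: (eqVneq j l) => [->|hjl]; first by right.
  exfalso; move: hj; case: hk => a [_ hv].
  by rewrite hv /eB !val_eqE (negbTE hjk) (negbTE hjl) mulr0 eqxx.
  subst j; exact: (node_scalarB hchar hc kl hk hy hE hD).
subst j; apply: (node_scalarB hchar hc (k:=l) (l:=k)) => //.
- by rewrite eq_sym.
- by apply: proj_eq_ext2 hk => i; rewrite eB_sym.
- exact: hE.
- exact: hD.
Qed.
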